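(* Let $q$ be an odd prime power. If $\{x_k\}_{k\in[n]}$ in $\mathbb{F}_{q^2}^d$ is an $(a,c_1,c_2)$-projective $2$-design for some $a,c_1,c_2\in\mathbb{F}_q$, then $n\ge d^2$.
   Context: For $a\in\mathbb{F}_{q^2}$ write $\overline{a}=a^q$; $A^*$ is conjugate transpose; $\langle x,y\rangle=x^*y$ on $\mathbb{F}_{q^2}^d$ and analogously on $(\mathbb{F}_{q^2}^d)^{\otimes 2}$. For a nondegenerate subspace $V$ (i.e. $V\cap V^\perp=\{0\}$), a family $\{y_k\}_{k\in[n]}$ in $V$ is a $c$-tight frame for $V$ ($c\in\mathbb{F}_q$) if $\operatorname{span}\{y_k\}=V$ and $\sum_k\langle y_k,y\rangle y_k=cy$ for all $y\in V$. $(\mathbb{F}_{q^2}^d)^{\otimes2}_{\mathrm{sym}}=\{\sum_{i,j}c_{ij}e_i\otimes e_j:c_{ij}=c_{ji}\}$ is nondegenerate with orthogonal projection $\Pi_d^{(2)}=\frac12\sum_{i,j}(e_ie_i^*\otimes e_je_j^*+e_ie_j^*\otimes e_je_i^* )$. A family $\{x_k\}_{k\in[n]}$ in $\mathbb{F}_{q^2}^d$ is an $(a,c_1,c_2)$-projective $2$-design ($a,c_1,c_2\in\mathbb{F}_q$) if (i) $\langle x_k,x_k\rangle=a$ for all $k$, (ii) $\{x_k\}$ is a $c_1$-tight frame for $\mathbb{F}_{q^2}^d$, and (iii) $\{x_k\otimes x_k\}$ is a $c_2$-tight frame for $(\mathbb{F}_{q^2}^d)^{\otimes 2}_{\mathrm{sym}}$.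 *)

(* Defs.v *)
From HB Require Import structures.
From mathcomp Require Import all_boot all_order all_algebra all_field.
Set Implicit Arguments. Unset Strict Implicit. Unset Printing Implicit Defensive.
Import GRing.Theory.
Local Open Scope ring_scope.

(* F plays the role of F_{q^2}; conjugation a |-> a^q. *)
Definition hconj (F : finFieldType) (q : nat) (a : F) : F := a ^+ q.

(* Elements of F_q inside F_{q^2}: fixed points of conjugation. *)
Definition in_Fq (F : finFieldType) (q : nat) (a : F) : Prop := a ^+ q = a.

(* Hermitian inner product <u,v> = u^* v on F^(r x s); vectors of F^d are
   'rV_d = 'M_(1,d), and (F^d)^{⊗2} is identified with 'M_(d,d) via
   e_i ⊗ e_j <-> delta_mx i j. *)
Definition hip (F : finFieldType) (q : nat) (r s : nat) (u v : 'M[F]_(r, s)) : F :=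
  \sum_(i < r) \sum_(j < s) hconj q (u i j) * v i j.

Definition tight_frame (F : finFieldType) (q : nat) (r s n : nat)
  (V : 'M[F]_(r, s) -> Prop) (y : 'I_n -> 'M[F]_(r, s)) (c : F) : Prop :=
  (forall k, V (y k)) /\
  (forall v, V v <-> exists alpha : 'I_n -> F, v = \sum_(k < n) alpha k *: y k) /\
  (forall v, V v -> \sum_(k < n) hip q (y k) v *: y k = c *: v).

Definition full_space (F : finFieldType) (d : nat) (v : 'rV[F]_d) : Prop := True.

Definition sym_tensors (F : finFieldType) (d : nat) (A : 'M[F]_(d, d)) : Prop :=
  forall i j, A i j = A j i.

Definition tensor2 (F : finFieldType) (d : nat) (x : 'rV[F]_d) : 'M[F]_(d, d) :=
  \matrix_(i, j) (x 0 i * x 0 j).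

Definition projective_2design (F : finFieldType) (q d n : nat)
  (x : 'I_n -> 'rV[F]_d) (a c1 c2 : F) : Prop :=
  (forall k, hip q (x k) (x k) = a) /\
  tight_frame q (@full_space F d) x c1 /\
  tight_frame q (@sym_tensors F d) (fun k => tensor2 (x k)) c2.

(* Main.v *)
Require Import Defs.
From HB Require Import structures.
From mathcomp Require Import all_boot all_order all_algebra all_field.
From mathcomp Require Import ring zify.
Set Implicit Arguments. Unset Strict Implicit. Unset Printing Implicit Defensive.
Import GRing.Theory.
Local Open Scope ring_scope.

Lemma sum2_delta (F : finFieldType) m d (G : 'I_m -> 'I_d -> F) a b :
  \sum_i \sum_j G i j * (delta_mx a b : 'M[F]_(m,d)) i j = G a b.
Proof.
rewrite (bigD1 a) //=.
rewrite [X in _ + X]big1 => [|i ne]; last first.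
  by apply: big1 => j _; rewrite mxE (negbTE ne) mulr0.
rewrite addr0 (bigD1 b) //=.
rewrite [X in _ + X]big1 => [|j ne]; last by rewrite mxE eqxx (negbTE ne) mulr0.
by rewrite mxE !eqxx mulr1 addr0.
Qed.

Section Char.
Variables (F : finFieldType) (p e q : nat).
Hypotheses (pp : prime p) (e0 : (0 < e)%N) (qE : q = (p ^ e)%N) (oq : odd q)
  (cF : #|F| = (q ^ 2)%N).

Lemma pcharF : p \in [pchar F].
Proof. by apply: (@card_finPcharP _ _ (e * 2)) => //; rewrite cF qE expnM. Qed.

Lemma natq : [pchar F].-nat q.
Proof.
rewrite qE pnatX (eq_pnat _ (pcharf_eq pcharF)) pnat_id //.
Qed.

Lemma hconjD (u v : F) : hconj q (u + v) = hconj q u + hconj q v.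
Proof. by rewrite /hconj exprDn_pchar // natq. Qed.

Lemma two_neq0 : (2 : F) != 0.
Proof.
apply/negP => /eqP h2.
have : (p %| 2)%N by rewrite (dvdn_pcharf pcharF) h2.
move=> /(dvdn_leq (isT : (0 < 2)%N)) hp2.
have p2 : p = 2%N by move: (prime_gt1 pp) hp2; case: p => [|[|[|]]].
by move: oq; rewrite qE p2 oddX orbF; case: e e0.
Qed.
End Char.

Section Mx.
Variables (F : fieldType) (d : nat).

Lemma rowE0 m (M : 'M[F]_m) i j : M i j = row i M 0 j.
Proof. by rewrite mxE. Qed.

Lemma addE m n (A B : 'M[F]_(m, n)) i j : (A + B) i j = A i j + B i j.
Proof. by rewrite mxE. Qed.

Definition Swap : 'M[F]_(d * d) :=
  \matrix_p mxvec ((vec_mx (delta_mx 0 p : 'rV[F]_(d * d)) : 'M_d)^T).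

Lemma Swap_row a b : row (mxvec_index a b) Swap = delta_mx 0 (mxvec_index b a).
Proof. by rewrite rowK vec_mx_delta trmx_delta mxvec_delta. Qed.

Lemma idE a b c e :
  (1%:M : 'M[F]_(d * d)) (mxvec_index a b) (mxvec_index c e)
  = ((c == a) && (e == b))%:R.
Proof.
have := congr1 (fun M : 'rV_(d * d) => M 0 (mxvec_index c e)) (@row1 F _ (mxvec_index a b)).
rewrite -mxvec_delta mxvecE => h.
by rewrite rowE0 h mxE.
Qed.

Lemma SwapE a b c e :
  Swap (mxvec_index a b) (mxvec_index c e) = ((c == b) && (e == a))%:R.
Proof.
have := congr1 (fun M : 'rV_(d * d) => M 0 (mxvec_index c e)) (Swap_row a b).
rewrite -mxvec_delta mxvecE => h.
by rewrite rowE0 h mxE.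
Qed.

Lemma Swap2 : Swap *m Swap = 1%:M.
Proof.
apply/row_matrixP => p; case/mxvec_indexP: p => a b.
by rewrite row_mul Swap_row -rowE Swap_row row1.
Qed.

Lemma rankSwap : \rank Swap = (d * d)%N.
Proof. by apply: mxrank_unit; case: (mulmx1_unit Swap2). Qed.

Definition Sym : 'M[F]_(d * d) := 1%:M + Swap.

Lemma SymE a b c e : Sym (mxvec_index a b) (mxvec_index c e)
  = ((c == a) && (e == b))%:R + ((c == b) && (e == a))%:R.
Proof. rewrite /Sym addE; congr (_ + _); [exact: idE | exact: SwapE]. Qed.

Lemma Sym_row a b :
  row (mxvec_index a b) Sym = mxvec (delta_mx a b + delta_mx b a : 'M[F]_d).
Proof.
apply/rowP => j; case/mxvec_indexP: j => c e.
by rewrite mxvecE mxE SymE addE !mxE.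
Qed.

Definition Sg : 'M[F]_d := \matrix_(a, b) (((a < b)%N)%:R - ((b < a)%N)%:R).
Definition Dg : 'M[F]_(d * d) := diag_mx (mxvec Sg).

Lemma SymSg : Sym + Dg *m Sym *m Dg = 2%:M.
Proof.
rewrite mul_diag_mx mul_mx_diag.
apply/matrixP => p p'; case/mxvec_indexP: p => a b; case/mxvec_indexP: p' => c e.
rewrite addE [in X in _ + X]mxE [in X in _ + X]mxE !mxvecE !SymE.
rewrite -scalemx1 [RHS]mxE idE /Sg !mxE.
case Hab: ((c == a) && (e == b)).
  move/andP: Hab => [/eqP -> /eqP ->] /=.
  have [->|nab] := eqVneq a b; first by rewrite ?eqxx ?ltnn /=; ring.

  case: (ltngtP a b) => h /=; [ring | ring | by move: nab; rewrite (val_inj h) eqxx].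
case Hba: ((c == b) && (e == a)).
  move/andP: Hba => [/eqP ce /eqP ea]; subst c e.
  rewrite /=.
  have nab : a != b by apply: contraFN Hab => /eqP ->; rewrite eqxx.
  case: (ltngtP a b) => h /=; [ring | ring | by move: nab; rewrite (val_inj h) eqxx].
by rewrite /=; rewrite ?mulr0 ?mul0r ?addr0 ?mulr0; ring.
Qed.

End Mx.

Section Main.
Variables (F : finFieldType) (q d n : nat) (x : 'I_n -> 'rV[F]_d) (c1 c2 : F).
Hypothesis hconjD : forall u v : F, hconj q (u + v) = hconj q u + hconj q v.
Hypothesis two_neq0 : (2 : F) != 0.
Hypothesis q_gt0 : (0 < q)%N.
Hypothesis Hfull : tight_frame q (@full_space F d) x c1.
Hypothesis Hsymf : tight_frame q (@sym_tensors F d) (fun k => tensor2 (x k)) c2.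

Local Notation X k i := (x k 0 i).
Local Notation Z k i := (hconj q (x k 0 i)).

Lemma hconjM (u v : F) : hconj q (u * v) = hconj q u * hconj q v.
Proof. by rewrite /hconj exprMn. Qed.

Lemma Hx i a : \sum_k X k a * Z k i = c1 * (a == i)%:R.
Proof.
case: Hfull => _ [_ H].
have := congr1 (fun M : 'rV_d => M 0 a) (H (delta_mx 0 i) I).
rewrite summxE !mxE eqxx /= => <-.
apply: eq_bigr => k _; rewrite mxE mulrC; congr (_ * _).
by rewrite /hip (sum2_delta (fun r j => hconj q (x k r j))).
Qed.

Let ysym (a b : 'I_d) : 'M[F]_d := delta_mx a b + delta_mx b a.

Lemma ysymP a b : sym_tensors (ysym a b).
Proof. by move=> i j; rewrite /ysym !mxE addrC; congr (_ + _); rewrite andbC. Qed.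

Lemma Hs a b i j :
  2 * \sum_k Z k a * Z k b * X k i * X k j
  = c2 * (((i == a) && (j == b))%:R + ((i == b) && (j == a))%:R).
Proof.
case: Hsymf => _ [_ H].
have := congr1 (fun M : 'M_d => M i j) (H (ysym a b) (ysymP a b)).
rewrite summxE !mxE => <-.
rewrite mulr_sumr; apply: eq_bigr => k _; rewrite mxE.
rewrite /hip /ysym.
have -> : forall G : 'I_d -> 'I_d -> F,
  \sum_i0 \sum_j0 G i0 j0 * (delta_mx a b + delta_mx b a : 'M[F]_d) i0 j0
  = G a b + G b a.
  move=> G; rewrite -(sum2_delta G a b) -(sum2_delta G b a) -big_split /=.
  by apply: eq_bigr => i0 _; rewrite -big_split; apply: eq_bigr => j0 _; rewrite mxE mulrDr.
rewrite !mxE !hconjM mulr2n mulrDl !mul1r.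
ring.
Qed.


Lemma scaleE m m' (c : F) (A : 'M[F]_(m, m')) i j : (c *: A) i j = c * A i j.
Proof. by rewrite mxE. Qed.
Lemma mulE m m' m'' (A : 'M[F]_(m, m')) (B : 'M[F]_(m', m'')) i j :
  (A *m B) i j = \sum_k A i k * B k j.
Proof. by rewrite mxE. Qed.
Lemma trE m m' (A : 'M[F]_(m, m')) i j : A^T i j = A j i.
Proof. by rewrite mxE. Qed.

Definition Nk k : 'M[F]_d := \matrix_(a, i) (X k a * Z k i).
Definition R : 'M[F]_(n, d * d) := \matrix_k mxvec (Nk k).
Lemma RE k a i : R k (mxvec_index a i) = X k a * Z k i.
Proof. by rewrite mxE mxvecE mxE. Qed.
Definition u : 'rV[F]_(d * d) := mxvec 1%:M.
Lemma uE a i : u 0 (mxvec_index a i) = (a == i)%:R.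
Proof. by rewrite mxvecE mxE. Qed.

Lemma PhiE : 2 *: (R^T *m R) = c2 *: (Swap F d + u^T *m u).
Proof.
apply/matrixP => p p'; case/mxvec_indexP: p => a i; case/mxvec_indexP: p' => b j.
rewrite !scaleE addE mulE mulE big_ord1 [u^T _ _]mxE !uE SwapE.
transitivity (2 * \sum_k Z k i * Z k j * X k a * X k b).
  by congr (_ * _); apply: eq_bigr => k _; rewrite mxE !RE; ring.
rewrite Hs; congr (_ * _).
by case: (eqVneq a i) => _; case: (eqVneq b j) => _; case: (eqVneq a j) => _;
  case: (eqVneq b i) => _; rewrite /=; ring.
Qed.

Lemma Hones : const_mx 1 *m R = c1 *: u.
Proof.
apply/rowP => p; case/mxvec_indexP: p => a i.
rewrite mulE scaleE uE -Hx; apply: eq_bigr => k _.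
by rewrite RE mxE mul1r.
Qed.

Lemma case_c2 : c2 != 0 -> (0 < d)%N -> (d * d <= n)%N.
Proof.
move=> c2n0 d0.
have Sw : Swap F d = c2^-1 *: (2 *: (R^T *m R)) - u^T *m u.
  by rewrite PhiE scalerA mulVf // scale1r addrK.
have [c10|c1n0] := eqVneq c1 0; last first.
  have uR : (u <= R)%MS.
    have -> : u = c1^-1 *: (const_mx 1 *m R) by rewrite Hones scalerA mulVf // scale1r.
    by rewrite scalemx_sub // submxMl.
  have : (Swap F d <= R)%MS.
    rewrite Sw addmx_sub //.
      by rewrite !scalemx_sub // submxMl.
    rewrite (eqmx_opp (u^T *m u)).
    exact: submx_trans (submxMl _ _) uR.
  move/mxrankS; rewrite rankSwap => h; exact: leq_trans h (rank_leq_row R).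
have n0 : (0 < n)%N.
  rewrite lt0n; apply/negP => /eqP n0.
  have := Hs (Ordinal d0) (Ordinal d0) (Ordinal d0) (Ordinal d0).
  rewrite big1 => [|k _]; last by move: (ltn_ord k); rewrite {2}n0.
  rewrite !eqxx /= mulr0 => /esym/eqP; rewrite mulf_eq0 (negbTE c2n0) /=.
  by rewrite -mulr2n (negbTE two_neq0).
have Ones0 : (const_mx 1 : 'rV[F]_n) *m R = 0 by rewrite Hones c10 scale0r.
have k1 : (1 <= \rank (kermx R))%N.
  have : ((const_mx 1 : 'rV[F]_n) <= kermx R)%MS by rewrite sub_kermx Ones0.
  move/mxrankS; apply: leq_trans.
  rewrite lt0n mxrank_eq0; apply/eqP => /rowP /(_ (Ordinal n0)); rewrite !mxE.
  by apply/eqP; exact: oner_neq0.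
rewrite mxrank_ker in k1.
have r1 : (\rank (Swap F d) <= \rank (c2^-1 *: (2 *: (R^T *m R))) + \rank (- (u^T *m u)))%N.
  by rewrite Sw mxrank_add.
have r2 : (\rank (c2^-1 *: (2 *: (R^T *m R))) <= \rank R)%N.
  exact: leq_trans (mxrank_scale _ _) (leq_trans (mxrank_scale _ _) (mxrankM_maxr _ _)).
have r3 : (\rank (- (u^T *m u)) <= 1)%N.
  rewrite (eqmx_opp (u^T *m u)); exact: leq_trans (mxrankM_maxr _ _) (rank_leq_row u).
rewrite rankSwap in r1.
lia.
Qed.

Definition Ry : 'M[F]_(n, d * d) := \matrix_k mxvec (tensor2 (x k)).
Lemma RyE k a b : Ry k (mxvec_index a b) = X k a * X k b.
Proof. by rewrite mxE mxvecE mxE. Qed.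
Definition Rc : 'M[F]_(n, d * d) := \matrix_(k, p) hconj q (Ry k p).

Lemma hconj0 : hconj q (0 : F) = 0.
Proof. by rewrite /hconj expr0n eqn0Ngt q_gt0. Qed.
Lemma hconj_sum (f : 'I_n -> F) : hconj q (\sum_k f k) = \sum_k hconj q (f k).
Proof. exact: (big_morph _ hconjD hconj0). Qed.
Lemma hconj_nat (b : bool) : hconj q (b%:R : F) = b%:R.
Proof. by case: b; rewrite /= ?hconj0 // /hconj expr1n. Qed.

Lemma RcRy : c2 = 0 -> Rc^T *m Ry = 0.
Proof.
move=> c20.
apply/matrixP => p p'; case/mxvec_indexP: p => a b; case/mxvec_indexP: p' => i j.
rewrite mulE [RHS]mxE.
have := Hs a b i j; rewrite c20 mul0r => /eqP; rewrite mulf_eq0 (negbTE two_neq0) /= => /eqP h0.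
rewrite -[RHS]h0; apply: eq_bigr => k _; rewrite mxE mxE !RyE hconjM; ring.
Qed.

Lemma Hspan a b : exists al : 'I_n -> F,
  delta_mx a b + delta_mx b a = \sum_k al k *: tensor2 (x k).
Proof.
case: Hsymf => _ [H _].
exact: (proj1 (H (ysym a b)) (ysymP a b)).
Qed.

Lemma Sym_Ry : (Sym F d <= Ry)%MS.
Proof.
apply/row_subP => p; case/mxvec_indexP: p => a b.
rewrite Sym_row; have [al ->] := Hspan a b.
rewrite linear_sum /=.
have -> : \sum_k mxvec (al k *: tensor2 (x k)) = (\row_k al k) *m Ry.
  rewrite mulmx_sum_row; apply: eq_bigr => k _.
  by rewrite linearZ /= rowK mxE.
exact: submxMl.
Qed.

Lemma Sym_Rc : (Sym F d <= Rc)%MS.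
Proof.
apply/row_subP => p; case/mxvec_indexP: p => a b.
have [al Hal] := Hspan a b.
have -> : row (mxvec_index a b) (Sym F d) = (\row_k hconj q (al k)) *m Rc.
  apply/rowP => p'; case/mxvec_indexP: p' => c e.
  have := congr1 (fun M : 'M[F]_d => M c e) Hal.
  rewrite summxE [LHS]addE [delta_mx a b c e]mxE [delta_mx b a c e]mxE => h.
  rewrite mxE SymE mulE.
  rewrite -[in LHS]hconj_nat -[W in _ + W = _]hconj_nat -hconjD h hconj_sum.
  apply: eq_bigr => k _; rewrite !mxE hconjM.
  by rewrite !mxvecE !mxE.
exact: submxMl.
Qed.

Lemma case_c20 : c2 = 0 -> (d * d <= n)%N.
Proof.
move=> c20.
have k : (Rc^T <= kermx Ry)%MS by rewrite sub_kermx RcRy.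
have r1 := mxrankS k; rewrite mxrank_ker mxrank_tr in r1.
have r2 := mxrankS Sym_Ry; have r3 := mxrankS Sym_Rc.
have r4 : \rank (2%:M : 'M[F]_(d * d)) = (d * d)%N.
  by rewrite -scalemx1 mxrank_scale_nz // mxrank1.
have r5 := mxrank_add (Sym F d) (Dg F d *m Sym F d *m Dg F d).
have r6 : (\rank (Dg F d *m Sym F d *m Dg F d) <= \rank (Sym F d))%N.
  exact: leq_trans (mxrankM_maxl _ _) (mxrankM_maxr _ _).
rewrite SymSg r4 in r5.
have := rank_leq_row Ry.
lia.
Qed.
End Main.

Unset Implicit Arguments.

Theorem mainTheorem7 (F : finFieldType) (p e q d n : nat)
  (x : 'I_n -> 'rV[F]_d) (a c1 c2 : F) :
  prime p -> (0 < e)%N -> q = (p ^ e)%N -> odd q ->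
  #|F| = (q ^ 2)%N ->
  in_Fq q a -> in_Fq q c1 -> in_Fq q c2 ->
  projective_2design q x a c1 c2 ->
  (d ^ 2 <= n)%N.
Proof.
move=> pp e0 qE oq cF _ _ _ [_ [Hf Hs]].
have q0 : (0 < q)%N by move: oq; case: (q).
have hD : forall u v : F, hconj q (u + v) = hconj q u + hconj q v.
  by move=> u v; apply: (hconjD pp qE cF).
have h2 : (2 : F) != 0 by apply: (two_neq0 pp e0 qE oq cF).
rewrite expnS expn1.
case: (posnP d) => [-> //|d0].
have [c20|c2n0] := eqVneq c2 0.
  exact: (case_c20 hD h2 q0 Hs c20).
exact: (case_c2 h2 q0 Hf Hs c2n0 d0).
Qed.
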